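(* Let $f\colon X\to X$ be a piecewise $\lambda$-contraction and fix $x_0\in X$. Then $\omega(f,x)\subseteq\Omega(f)$ for every $x\in Z(f)$.
   Context: $(X,d)$ is a compact metric space whose open balls are connected, with $\mathrm{diam}(X)>0$, and $\lambda\in(0,1)$. A piecewise $\lambda$-contraction $f$: there exist $N\in\mathbb{N}$, open connected pairwise disjoint $A_1,\dots,A_N\subset X$ with dense union $X'$, and bi-Lipschitz $\varphi_i\colon X\to X$ with Lipschitz constant $\le\lambda$, $f|_{A_i}=\varphi_i|_{A_i}$; $S(f)=X\setminus X'$. $x$ is regular of order $n$ if $f^j(x)\notin S(f)$ for $0\le j<n$, regular if for all $n$; $Z(f)$ is the set of regular points. $\mathcal{I}_n(f)$ is the set of itineraries of order $n$, i.e. tuples $(i_0,\dots,i_{n-1})$ such that some regular point $x$ of order $n$ has $f^j(x)\in A_{i_j}$ for $0\le j<n$. For $\alpha=(i_0,\dots,i_{n-1})$, $\varphi^\alpha=\varphi_{i_{n-1}}\circ\cdots\circ\varphi_{i_0}$. $\Omega(f)=\bigcap_{m\ge1}\overline{\bigcup_{n\ge m}\{\varphi^\alpha(x_0):\alpha\in\mathcal{I}_n(f)\}}$. $\omega(f,x)=\bigcap_{m\ge1}\overline{\bigcup_{n\ge m}\{f^n(x)\}}$. *)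

(* Defs.v *)
From HB Require Import structures.
From mathcomp Require Import all_boot all_order all_algebra.
From mathcomp Require Import all_classical all_reals all_analysis.
Set Implicit Arguments. Unset Strict Implicit. Unset Printing Implicit Defensive.
Import Order.TTheory GRing.Theory Num.Theory.
Local Open Scope classical_set_scope.
Local Open Scope ring_scope.

Section PiecewiseContraction.
Context {R : realType} {X : metricType R} {N : nat}.
Variables (A : 'I_N -> set X) (phi : 'I_N -> X -> X) (f : X -> X).

Definition Xprime : set X := \bigcup_(i in [set: 'I_N]) A i.
Definition Sing : set X := ~` Xprime.

Definition piecewise_contraction (lam : R) : Prop :=
  [/\ (forall i, open (A i) /\ connected (A i)),
      (forall i j, i != j -> A i `&` A j = set0),
      closure Xprime = setT,
      (forall i, exists2 c : R, 0 < c &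
         forall x y, c * mdist x y <= mdist (phi i x) (phi i y)
                     /\ mdist (phi i x) (phi i y) <= lam * mdist x y) &
      (forall i x, A i x -> f x = phi i x)].

Definition regular_of_order (n : nat) (x : X) : Prop :=
  forall j, (j < n)%N -> ~ Sing (iter j f x).

Definition Zreg : set X := [set x | forall n, regular_of_order n x].

Definition itineraries (n : nat) : set (n.-tuple 'I_N) :=
  [set a | exists x, regular_of_order n x /\
           forall j : 'I_n, A (tnth a j) (iter j f x)].

Arguments itineraries n : clear implicits.

Definition phi_itin (s : seq 'I_N) (x : X) : X :=
  foldl (fun y i => phi i y) x s.

Definition Omega (x0 : X) : set X :=
  \bigcap_(m in [set m : nat | (1 <= m)%N])
    closure (\bigcup_(n in [set n : nat | (m <= n)%N])
               ((fun a : n.-tuple 'I_N => phi_itin (tval a) x0) @` itineraries n)).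

Definition omega_lim (x : X) : set X :=
  \bigcap_(m in [set m : nat | (1 <= m)%N])
    closure (\bigcup_(n in [set n : nat | (m <= n)%N]) [set iter n f x]).

End PiecewiseContraction.

(* Main.v *)
Require Import Defs.
From HB Require Import structures.
From mathcomp Require Import all_boot all_order all_algebra.
From mathcomp Require Import all_classical all_reals all_analysis.
Import Order.TTheory GRing.Theory Num.Theory.
Local Open Scope classical_set_scope.
Local Open Scope ring_scope.

Lemma dist_bound (R : realType) (X : metricType R) (N : nat)
  (phi : 'I_N -> X -> X) (lam : R) (hl : 0 <= lam)
  (hphi : forall i (x y : X), mdist (phi i x) (phi i y) <= lam * mdist x y) :
  forall s x y, mdist (phi_itin phi s x) (phi_itin phi s y) <= lam ^+ size s * mdist x y.
Proof.
elim=> [|i s IH] x y /=; first by rewrite expr0 mul1r.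
rewrite /phi_itin /=.
apply: (le_trans (IH _ _)).
rewrite exprSr -mulrA ler_wpM2l ?exprn_ge0 //.
Qed.

Theorem lemma3p2 (R : realType) (X : metricType R)
  (hcompact : compact [set: X])
  (hballs : forall (x : X) (r : R), 0 < r -> connected (ball x r))
  (hdiam : exists x y : X, 0 < mdist x y)
  (lam : R) (hlam : 0 < lam < 1)
  (N : nat) (A : 'I_N -> set X) (phi : 'I_N -> X -> X) (f : X -> X)
  (hf : piecewise_contraction A phi f lam)
  (x0 : X) :
  forall x, Zreg A f x -> omega_lim f x `<=` Omega A phi f x0.
Proof.
move=> x hx y hy.
case: hf => _ _ _ hlip hfA.
have hphi : forall i (a b : X), mdist (phi i a) (phi i b) <= lam * mdist a b.
  by move=> i a b; have [c _ /(_ a b) []] := hlip i.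
case/andP: hlam => lam0 lam1.
have hex : forall j : nat, exists i, A i (iter j f x).
  move=> j; have := hx j.+1 j (ltnSn j).
  move=> /contrapT [i _ Hi]; by exists i.
have [idx hidx] := choice hex.
have hiter : forall n, iter n f x = phi_itin phi (map idx (iota 0 n)) x.
  elim=> [|n IH] //.
  rewrite -addn1 iotaD map_cat /phi_itin foldl_cat /= -[foldl _ x _]/(phi_itin phi _ x) -IH.
  by rewrite add0n addn1 iterS (hfA _ _ (hidx n)).
set d := mdist x x0.
move=> m /= hm B /nbhs_ballP [e /= e0 hB].
have hcv : (fun n : nat => lam ^+ n * d) @ \oo --> (0 : R^o).
  rewrite -(mul0r d); apply: cvgMl; apply: cvg_expr.
  by rewrite ger0_norm ?ltW.
have [K _ HK] := @cvgr_lt _ _ _ _ _ _ hcv _ (divr_gt0 e0 (ltr0n _ 2)).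
have hy' := hy (maxn m K) (leq_trans hm (leq_maxl _ _)).
have [z [[n /= hn ->] hz]] := hy' _ (nbhsx_ballx y _ (divr_gt0 e0 (ltr0n _ 2))).
have hnK : (K <= n)%N := leq_trans (leq_maxr _ _) hn.
have hnm : (m <= n)%N := leq_trans (leq_maxl _ _) hn.
pose s := map idx (iota 0 n).
have hs : size s == n by rewrite size_map size_iota.
pose a := @Tuple n _ s hs.
exists (phi_itin phi s x0); split; last first.
  apply: hB; rewrite [e in ball _ e]splitr.
  apply: (ball_triangle hz); rewrite ballEmdist /= hiter.
  apply: (le_lt_trans (@dist_bound R X N phi lam (ltW lam0) hphi s x x0)).
  by rewrite /s size_map size_iota; apply: HK.
exists n => //; exists a => //.
exists x; split; first exact: hx.
move=> j; rewrite (tnth_nth (idx 0%N)) /= /s (nth_map 0%N) ?size_iota //.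
by rewrite nth_iota // add0n; apply: hidx.
Qed.
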